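(* For any fixed $m$, any fixed $k<m$ and any fixed $\vec p\in(0,1)^m$, $$\Pr_{P\sim(\pi_{\vec p})^n}\big(\mathrm{top}_k(\vec p)\subseteq\mathrm{EJR{+}}(P)\big)=1-\exp(-\Omega(n)).$$
   Context: $\mathcal A=[m]$, $\mathcal A_k$ the $k$-subsets. Approval profile $P=(A_1,\dots,A_n)$, $A_j\subseteq\mathcal A$, drawn i.i.d. from $\pi_{\vec p}$, where $\Pr_{\pi_{\vec p}}(A)=\prod_{i\in A}p_i\prod_{i\notin A}(1-p_i)$. $\mathrm{top}_k(\vec p)$ is the set of $W\in\mathcal A_k$ with $p_i\ge p_j$ for all $i\in W$, $j\notin W$. $W\in\mathcal A_k$ is in $\mathrm{EJR{+}}(P)$ iff there are no $a\in\mathcal A\setminus W$, integer $\ell\ge1$ and set of voters $N'\subseteq[n]$ with $|N'|\ge\ell n/k$ such that every $j\in N'$ has $a\in A_j$ and $|A_j\cap W|<\ell$. Asymptotics as $n\to\infty$. *)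

(* Defs.v *)
From HB Require Import structures.
From mathcomp Require Import all_boot all_order all_algebra.
From mathcomp Require Import boolp reals sequences exp.
Set Implicit Arguments. Unset Strict Implicit. Unset Printing Implicit Defensive.
Import Order.TTheory GRing.Theory Num.Theory.
Local Open Scope ring_scope.

Section Defs.
Variable R : realType.
Variables (m : nat).

Definition pi_p (p : 'I_m -> R) (A : {set 'I_m}) : R :=
  (\prod_(i in A) p i) * (\prod_(i in ~: A) (1 - p i)).

Definition profile (n : nat) := {ffun 'I_n -> {set 'I_m}}.

Definition profile_prob (p : 'I_m -> R) (n : nat) (P : profile n) : R :=
  \prod_(j < n) pi_p p (P j).

Definition top_k (p : 'I_m -> R) (k : nat) (W : {set 'I_m}) : Prop :=
  #|W| = k /\ (forall i j, i \in W -> j \notin W -> p j <= p i).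

Definition EJRplus (k n : nat) (P : profile n) (W : {set 'I_m}) : Prop :=
  #|W| = k /\
  ~ (exists a : 'I_m, a \notin W /\
       exists l : nat, (1 <= l)%N /\
       exists N' : {set 'I_n},
         ((l * n)%:R / k%:R <= #|N'|%:R :> R) /\
         (forall j, j \in N' -> a \in P j /\ (#|P j :&: W| < l)%N)).

Definition prob_top_in_EJR (p : 'I_m -> R) (k n : nat) : R :=
  \sum_(P : profile n | `[< forall W, top_k p k W -> EJRplus k P W >])
     profile_prob p P.

End Defs.

(* Main.v *)
Require Import Defs.
From HB Require Import structures.
From mathcomp Require Import all_boot all_order all_algebra.
From mathcomp Require Import boolp reals sequences exp.
From mathcomp Require Import zify ring lra.
Import Order.TTheory GRing.Theory Num.Theory.
Local Open Scope ring_scope.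

Section Prob.
Variable R : realType.
Variable m : nat.
Variable p : 'I_m -> R.

Definition fb (i : 'I_m) (b : bool) : R := if b then p i else 1 - p i.

Lemma pi_pE A : pi_p p A = \prod_i fb i (i \in A).
Proof.
rewrite /pi_p [X in X * _]big_mkcond [X in _ * X]big_mkcond -big_split /=.
apply: eq_bigr => i _; rewrite /fb inE; case: (i \in A); by rewrite ?mulr1 ?mul1r.
Qed.

Lemma sum_profile n (F : {set 'I_m} -> R) :
  \sum_(P : profile m n) \prod_(j < n) F (P j) = (\sum_A F A) ^+ n.
Proof.
rewrite /profile -(bigA_distr_bigA (fun (j : 'I_n) A => F A)) /=.
by rewrite prodr_const card_ord.
Qed.

Lemma sum_pi : (forall i, 0 <= p i <= 1) -> \sum_A pi_p p A = 1.
Proof.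
move=> hp.
have -> : \sum_A pi_p p A = \sum_(f : {ffun 'I_m -> bool}) \prod_i fb i (f i).
  rewrite (reindex (fun f : {ffun 'I_m -> bool} => [set x | f x])) /=.
    apply: eq_bigr => f _; rewrite pi_pE; apply: eq_bigr => i _; by rewrite inE.
  exists (fun A : {set 'I_m} => [ffun x => x \in A]) => f _.
    by apply/ffunP => x; rewrite ffunE inE.
  by apply/setP => x; rewrite inE ffunE.
rewrite -(bigA_distr_bigA fb) /=.
rewrite big1 // => i _; rewrite big_bool /fb /=; by rewrite addrC subrK.
Qed.

Lemma pi_ge0 A : (forall i, 0 <= p i <= 1) -> 0 <= pi_p p A.
Proof.
move=> hp; rewrite pi_pE; apply: prodr_ge0 => i _; rewrite /fb.
case: (i \in A); have := hp i; case/andP => h1 h2; by rewrite ?subr_ge0.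
Qed.

Hypothesis hp : forall i, 0 <= p i <= 1.

Lemma fb_ge0 i b : 0 <= fb i b.
Proof. rewrite /fb; case: b; have := hp i; case/andP => h1 h2; by rewrite ?subr_ge0. Qed.

Lemma card_sum (A B : {set 'I_m}) : #|A :&: B| = (\sum_(j in B) (j \in A))%N.
Proof.
rewrite -sum1_card big_mkcond [RHS]big_mkcond; apply: eq_bigr => j _.
rewrite inE; by case: (j \in A); case: (j \in B).
Qed.

Section Comb.
Variables (W : {set 'I_m}) (a : 'I_m) (l : nat).
Hypothesis haW : a \notin W.

Definition Y (A : {set 'I_m}) : nat := (\sum_(j in a |: W) (j \in A))%N.

Lemma gY (A : {set 'I_m}) : (a \in A) && (#|A :&: W| < l)%N = (a \in A) && (Y A <= l)%N.
Proof.
case: (boolP (a \in A)) => ha //=.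
by rewrite /Y big_setU1 //= ha card_sum add1n.
Qed.

Definition sig (i : 'I_m) (A : {set 'I_m}) : {set 'I_m} :=
  [set j | if (j == a) || (j == i) then j \notin A else j \in A].

Lemma sigK i : involutive (sig i).
Proof.
move=> A; apply/setP => j; rewrite !inE; by case: ((j == a) || (j == i)); rewrite ?negbK.
Qed.

Lemma sig_inj i : injective (sig i).
Proof. exact: (inv_inj (sigK i)). Qed.

Lemma sig_a i (A : {set 'I_m}) : (a \in sig i A) = (a \notin A).
Proof. by rewrite inE eqxx. Qed.

Lemma sig_i i (A : {set 'I_m}) : (i \in sig i A) = (i \notin A).
Proof. by rewrite inE eqxx orbT. Qed.

Lemma Y_sig i (A : {set 'I_m}) : i \in W -> (a \in A) != (i \in A) -> Y (sig i A) = Y A.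
Proof.
move=> hi hne.
have hia : i != a by apply/eqP => e; move: haW; rewrite -e hi.
rewrite /Y (bigD1 a) ?setU11 //= [RHS](bigD1 a) ?setU11 //=.
rewrite (bigD1 i) /= ?hia ?inE ?hi ?orbT //= [in RHS](bigD1 i) /= ?hia ?inE ?hi ?orbT //=.
have -> : (\sum_(j | (j \in a |: W) && (j != a) && (j != i)) (j \in sig i A))%N =
          (\sum_(j | (j \in a |: W) && (j != a) && (j != i)) (j \in A))%N.
  apply: eq_bigr => j /andP[/andP[_ hja] hji]; by rewrite inE (negbTE hja) (negbTE hji).

rewrite !eqxx !orbT /=. move: hne; case: (a \in A); case: (i \in A) => //= _; lia.
Qed.

Lemma pi_sig i (A : {set 'I_m}) : i != a -> p a <= p i -> a \in A -> i \notin A ->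
  pi_p p A <= pi_p p (sig i A).
Proof.
move=> hia hle ha hi.
have e1 : forall B, pi_p p B = fb a (a \in B) * (fb i (i \in B) *
    \prod_(j | (j != a) && (j != i)) fb j (j \in B)).
  move=> B; rewrite pi_pE (bigD1 a) //= (bigD1 i) //=.
rewrite !e1.
have -> : \prod_(j | (j != a) && (j != i)) fb j (j \in sig i A) =
          \prod_(j | (j != a) && (j != i)) fb j (j \in A).
  apply: eq_bigr => j /andP[hja hji]; by rewrite inE (negbTE hja) (negbTE hji).
rewrite sig_a sig_i ha (negbTE hi) /fb /=.
set X := \prod_(j | _) _.
have hX : 0 <= X by apply: prodr_ge0 => j _; exact: fb_ge0.
rewrite !mulrA; apply: ler_wpM2r => //.
rewrite mulrBr mulrBl mulr1 mul1r; lra.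
Qed.

Lemma comb (k : nat) : #|W| = k -> (forall i, i \in W -> p a <= p i) ->
  k.+1%:R * (\sum_A pi_p p A * ((a \in A) && (#|A :&: W| < l)%N)%:R) <= l%:R.
Proof.
move=> hk hle.
pose h j := \sum_A pi_p p A * ((j \in A) && (Y A <= l)%N)%:R.
have hq : \sum_A pi_p p A * ((a \in A) && (#|A :&: W| < l)%N)%:R = h a.
  by apply: eq_bigr => A _; rewrite gY.
have hai : forall i, i \in W -> h a <= h i.
  move=> i hi.
  have hia : i != a by apply/eqP => e; move: haW; rewrite -e hi.
  suff : h a + h a <= h i + h i by lra.
  have ea : h a = \sum_A pi_p p (sig i A) * ((a \in sig i A) && (Y (sig i A) <= l)%N)%:R.
    by rewrite /h (reindex_inj (sig_inj i)).
  have ei : h i = \sum_A pi_p p (sig i A) * ((i \in sig i A) && (Y (sig i A) <= l)%N)%:R.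
    by rewrite /h (reindex_inj (sig_inj i)).
  rewrite {2}ea {2}ei /h -!big_split /=; apply: ler_sum => A _.
  rewrite sig_a sig_i.
  case ha: (a \in A); case hi': (i \in A) => /=.
  - by rewrite !mulr0 !addr0.
    rewrite Y_sig ?ha ?hi' // !mulr0 addr0 add0r.
    apply: ler_wpM2r; first by case: (_ <= _)%N.
    by apply: pi_sig => //; [exact: hle | rewrite hi'].
  - rewrite Y_sig ?ha ?hi' // !mulr0 addr0 add0r.
    apply: ler_wpM2r; first by case: (_ <= _)%N.
    rewrite -{2}(sigK i A); apply: pi_sig => //; first exact: hle.
      by rewrite sig_a ha.
    by rewrite sig_i hi'.
  - by rewrite !mulr0 ?addr0.
have hS : #|a |: W| = k.+1 by rewrite cardsU1 haW hk.
rewrite hq.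
have -> : k.+1%:R * h a = \sum_(j in a |: W) h a by rewrite sumr_const hS mulr_natl.
apply: (@le_trans _ _ (\sum_(j in a |: W) h j)).
  apply: ler_sum => j; rewrite in_setU1 => /orP[/eqP -> //|hj]; exact: hai.
rewrite /h exchange_big /=.
apply: (@le_trans _ _ (\sum_A pi_p p A * l%:R)).
  apply: ler_sum => A _; rewrite -mulr_sumr; apply: ler_wpM2l; first exact: pi_ge0.
  case hc: (Y A <= l)%N.
    under eq_bigr do rewrite andbT.
    by rewrite -natr_sum ler_nat.
  by rewrite big1 // => j _; rewrite andbF.
by rewrite -mulr_suml sum_pi // mul1r.
Qed.

End Comb.

Lemma prob_ge0 n (P : profile m n) : 0 <= profile_prob p P.
Proof. by apply: prodr_ge0 => j _; apply: pi_ge0. Qed.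

Lemma chernoff n (g : {set 'I_m} -> bool) (k l : nat) (y : R) :
  (0 < k)%N -> 1 <= y ->
  \sum_(P : profile m n | (l * n)%:R / k%:R <= #|[set j | g (P j)]|%:R :> R)
      profile_prob p P
  <= ((1 + (y ^+ k - 1) * \sum_A pi_p p A * (g A)%:R) / y ^+ l) ^+ n.
Proof.
move=> hk hy.
have hy0 : 0 < y by apply: lt_le_trans hy.
set z := y ^+ k.
apply: (@le_trans _ _ (\sum_(P : profile m n)
    profile_prob p P * (z ^+ #|[set j | g (P j)]| / y ^+ (l * n)))).
  rewrite [X in X <= _]big_mkcond /=; apply: ler_sum => P _.
  case: ifP => hE; last first.
    apply: mulr_ge0; first exact: prob_ge0.
    have hz : 0 <= z by rewrite /z exprn_ge0 //; lra.
    by apply: divr_ge0; apply: exprn_ge0 => //; lra.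
  rewrite -[X in X <= _]mulr1; apply: ler_wpM2l; first exact: prob_ge0.
  rewrite ler_pdivlMr ?exprn_gt0 // mul1r /z -exprM.
  apply: ler_weXn2l => //.
  move: hE; rewrite ler_pdivrMr ?ltr0n // -natrM ler_nat.
  move=> h; lia.
have -> : \sum_(P : profile m n)
    profile_prob p P * (z ^+ #|[set j | g (P j)]| / y ^+ (l * n)) =
    (\sum_(P : profile m n) \prod_(j < n) (pi_p p (P j) * (if g (P j) then z else 1)))
      / y ^+ (l * n).
  rewrite mulr_suml; apply: eq_bigr => P _; rewrite mulrA; congr (_ * _).
  rewrite /profile_prob [RHS]big_split /=; congr (_ * _).
  rewrite -prodr_const big_mkcond /=; apply: eq_bigr => j _; by rewrite inE.
rewrite (sum_profile n (fun A => pi_p p A * (if g A then z else 1))) exprM -expr_div_n.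
rewrite le_eqVlt; apply/orP; left; apply/eqP; congr ((_ / _) ^+ _).
have -> : \sum_A pi_p p A * (if g A then z else 1) =
          \sum_A (pi_p p A + (z - 1) * (pi_p p A * (g A)%:R)).
  apply: eq_bigr => A _; case: (g A) => /=; ring.
by rewrite big_split /= sum_pi // mulr_sumr.
Qed.

End Prob.
Arguments comb {R m p}. Arguments chernoff {R m p}. Arguments prob_ge0 {R m p}. Arguments pi_ge0 {R m p}. Arguments sum_pi {R m p}. Arguments sum_profile {R m}.
Section Real.
Variable R : realType.

Lemma bern1 (e : R) j : 0 <= e -> 1 + j%:R * e <= (1 + e) ^+ j.
Proof.
move=> he; elim: j => [|j IH]; first by rewrite expr0 mul0r addr0.
have hj : 0 <= j%:R * e by apply: mulr_ge0.
have hX : 0 <= (1 + e) ^+ j by apply: exprn_ge0; lra.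
rewrite exprS -addn1 natrD; nra.
Qed.

Lemma bern2 (e : R) j : 0 <= e -> (1 + e) ^+ j * (1 - j%:R * e) <= 1.
Proof.
move=> he; elim: j => [|j IH]; first by rewrite expr0 mul0r subr0 mul1r.
have hj : 0 <= j%:R * e by apply: mulr_ge0.
have hX : 0 <= (1 + e) ^+ j by apply: exprn_ge0; lra.
have h1 : (1 + e) * (1 - (j + 1)%:R * e) <= 1 - j%:R * e by rewrite natrD; nra.
rewrite exprSr -addn1 -mulrA.
apply: le_trans IH; exact: ler_wpM2l.
Qed.

Lemma ychoice (k l : nat) (q : R) : (0 < k)%N -> (0 < l)%N -> 0 <= q ->
  k.+1%:R * q <= l%:R ->
  1 + ((1 + (2 * k%:R * k.+1%:R)^-1) ^+ k - 1) * q < (1 + (2 * k%:R * k.+1%:R)^-1) ^+ l.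
Proof.
move=> hk hl hq hql.
set K : R := k%:R; set L : R := l%:R.
have hK : 1 <= K by rewrite /K ler1n.
have hL : 1 <= L by rewrite /L ler1n.
have hK1 : k.+1%:R = K + 1 by rewrite -addn1 natrD.
rewrite hK1 in hql *.
set e := (2 * K * (K + 1))^-1.
have hd : 0 < 2 * K * (K + 1) by nra.
have he : e * (2 * K * (K + 1)) = 1 by rewrite /e mulVf //; apply: lt0r_neq0.
have he0 : 0 < e by rewrite /e invr_gt0.
have b1 := @bern1 e l (ltW he0).
have b2 := @bern2 e k (ltW he0).
rewrite -/K -/L in b1 b2 hql.
set Z := (1 + e) ^+ k in b2 *.
have hZ : 1 <= Z.
  have := @bern1 e k (ltW he0); rewrite -/K -/Z. have : 0 <= K * e by apply: mulr_ge0; lra. lra.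
have s1 : Z * (2 * K + 1) <= 2 * K + 2 by nra.
have s2 : (Z - 1) * (2 * K + 1) <= 1 by nra.
have s3 : (Z - 1) * q * ((K + 1) * (2 * K + 1)) <= L.
  have t : 0 <= q * (K + 1) by nra.
  have : (Z - 1) * (2 * K + 1) * (q * (K + 1)) <= 1 * (q * (K + 1)) by apply: ler_wpM2r.
  nra.
suff : (Z - 1) * q < L * e by lra.
have hz : 0 <= (Z - 1) * q by nra.
nra.
Qed.

Definition GD (f : nat -> R) := exists C r : R, 0 <= C /\ 0 <= r < 1 /\
  forall n, (0 < n)%N -> f n <= C * r ^+ n.

Lemma GD_le (f g : nat -> R) : (forall n, (0 < n)%N -> f n <= g n) -> GD g -> GD f.
Proof.
move=> hfg [C [r [hC [hr h]]]]; exists C, r; split => // ; split => // n hn.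
exact: le_trans (hfg n hn) (h n hn).
Qed.

Lemma GD0 : GD (fun _ => 0).
Proof. exists 0, 0; split => //; split; [by rewrite lexx ltr01 | move=> n _; by rewrite mul0r]. Qed.

Lemma GD_add (f g : nat -> R) : GD f -> GD g -> GD (fun n => f n + g n).
Proof.
move=> [C1 [r1 [hC1 [/andP [hr1 hr1'] h1]]]] [C2 [r2 [hC2 [/andP [hr2 hr2'] h2]]]].
exists (C1 + C2), (Num.max r1 r2); split; first lra.
have hm1 : r1 <= Num.max r1 r2 by rewrite le_max lexx.
have hm2 : r2 <= Num.max r1 r2 by rewrite le_max lexx orbT.
split.
  by apply/andP; split; [lra | rewrite gt_max hr1' hr2'].
move=> n hn; rewrite mulrDl; apply: lerD.
  apply: le_trans (h1 n hn) _; apply: ler_wpM2l => //.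
  by apply: lerXn2r => //; rewrite qualifE /=; lra.
apply: le_trans (h2 n hn) _; apply: ler_wpM2l => //.
by apply: lerXn2r => //; rewrite qualifE /=; lra.
Qed.

Lemma GD_sum (X : Type) (s : seq X) (F : X -> nat -> R) :
  (forall x, GD (F x)) -> GD (fun n => \sum_(x <- s) F x n).
Proof.
move=> hF; elim: s => [|x s IH].
  by apply: (@GD_le _ _ _ GD0) => n _; rewrite big_nil.
apply: (@GD_le _ (fun n => F x n + \sum_(y <- s) F y n)); last exact: GD_add (hF x) IH.
move=> n _; by rewrite big_cons.
Qed.

Lemma GD_exp (f : nat -> R) : GD f ->
  exists c : R, 0 < c /\ exists N : nat, forall n : nat, (N <= n)%N ->
    f n <= expR (- (c * n%:R)).
Proof.
move=> [C [r0 [hC [/andP [hr0 hr0'] h]]]].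
set r := Num.max r0 (2^-1).
have hr1 : 2^-1 <= r by rewrite le_max lexx orbT.
have hr2 : r < 1 by rewrite gt_max hr0' /= invf_lt1 ?ltr1n ?ltr0n.
have hr : 0 < r by apply: lt_le_trans hr1; rewrite invr_gt0.
have hfr : forall n, (0 < n)%N -> f n <= C * r ^+ n.
  move=> n hn; apply: le_trans (h n hn) _; apply: ler_wpM2l => //.
  by apply: lerXn2r => //; rewrite ?qualifE /= ?le_max ?lexx //; lra.
have hln : ln r < 0 by apply: ln_lt0; rewrite hr hr2.
set s := expR (ln r / 2).
have hs0 : 0 < s by apply: expR_gt0.
have hs1 : s < 1 by rewrite /s expR_lt1; lra.
have hss : s ^+ 2 = r.
  by rewrite /s -expRM_natr mulfVK ?pnatr_eq0 // lnK // qualifE /= hr.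
set t := s^-1.
have ht : 1 < t by rewrite /t invf_gt1.
have hst : s * t = 1 by rewrite /t mulfV // gt_eqF.
have ht1 : 0 < t - 1 by lra.
exists (- (ln r / 2)); split; first lra.
exists (Num.Def.archi_bound (C / (t - 1))).+1 => n hn.
have hN := archi_boundP (x := C / (t - 1)) (divr_ge0 hC (ltW ht1) ).
have hn' : (Num.Def.archi_bound (C / (t - 1)) <= n)%N by apply: leq_trans hn.
have hnR : C / (t - 1) < n%:R by apply: lt_le_trans hN _; rewrite ler_nat.
have hCn : C <= n%:R * (t - 1).
  by move: hnR; rewrite ltr_pdivrMr ?subr_gt0 //; apply: ltW.
have hb := @bern1 (t - 1) n (ltW ht1).
rewrite addrCA subrr addr0 in hb.
have hCt : C <= t ^+ n by lra.
rewrite mulNr opprK expRM_natr -/s.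
apply: le_trans (hfr n (leq_trans (ltn0Sn _) hn)) _.
rewrite -hss -exprM mulnC exprM expr2 mulrA.
have hsn : 0 <= s ^+ n by apply: exprn_ge0; lra.
rewrite -[X in _ <= X]mul1r; apply: ler_wpM2r => //.
have : (s * t) ^+ n = 1 by rewrite hst expr1n.
rewrite exprMn => e1.
have htn : 0 <= t ^+ n by apply: exprn_ge0; lra.
have := ler_wpM2l hsn hCt; rewrite e1 mulrC; done.
Qed.

End Real.
Arguments GD_le {R f g}. Arguments GD0 {R}. Arguments GD_sum {R X}. Arguments GD_exp {R f}. Arguments ychoice {R k l q}.

Lemma sum_ge_term (R : realType) (I : finType) (F : I -> R) i :
  (forall j, 0 <= F j) -> F i <= \sum_j F j.
Proof.
move=> h; rewrite (bigD1 i) //= lerDl; apply: sumr_ge0 => j _; exact: h.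
Qed.

Lemma le_sum_term (R : realType) (I : finType) (F : I -> R) i x :
  (forall j, 0 <= F j) -> x <= F i -> x <= \sum_j F j.
Proof. move=> h hx; apply: le_trans hx _; exact: sum_ge_term. Qed.

Theorem theorem17 (R : realType) (m k : nat) (p : 'I_m -> R) :
  (0 < k)%N -> (k < m)%N -> (forall i, 0 < p i < 1) ->
  exists c : R, 0 < c /\
    exists N : nat, forall n : nat, (N <= n)%N ->
      1 - prob_top_in_EJR p k n <= expR (- (c * n%:R)).
Proof.
move=> hk hkm hp0.
have hp : forall i, 0 <= p i <= 1.
  by move=> i; have /andP[h1 h2] := hp0 i; rewrite (ltW h1) (ltW h2).
pose cond (W : {set 'I_m}) (a : 'I_m) (l : 'I_k.+1) :=
  [&& `[< top_k p k W >], a \notin W & (0 < l)%N].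
pose g (W : {set 'I_m}) (a : 'I_m) (l : nat) (A : {set 'I_m}) :=
  (a \in A) && (#|A :&: W| < l)%N.
pose E n (W : {set 'I_m}) (a : 'I_m) (l : 'I_k.+1) (P : profile m n) :=
  (l * n)%:R / k%:R <= #|[set j | g W a l (P j)]|%:R :> R.
pose F W a l n := \sum_(P : profile m n) (if cond W a l && E n W a l P then profile_prob p P else 0).
have hF0 : forall W a l n, 0 <= F W a l n.
  move=> W a l n; apply: sumr_ge0 => P _; case: ifP => _ //; exact: prob_ge0.
have stepB : GD R (fun n => \sum_W \sum_a \sum_l F W a l n).
  apply: GD_sum => W; apply: GD_sum => a; apply: GD_sum => l.
  case hc: (cond W a l); last first.
    apply: (GD_le _ GD0) => n _; rewrite /F big1 // => P _; by rewrite hc.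
  move: hc => /and3P [/asboolP htop haW hl0].
  set y : R := 1 + (2 * k%:R * k.+1%:R)^-1.
  have hy : 1 <= y by rewrite /y lerDl invr_ge0; apply: mulr_ge0 => //; apply: mulr_ge0.
  set q := \sum_A pi_p p A * (g W a l A)%:R.
  have hq : 0 <= q by apply: sumr_ge0 => A _; apply: mulr_ge0; [exact: pi_ge0 | case: (g _ _ _ _)].
  have hcomb : k.+1%:R * q <= l%:R.
    apply: (comb hp _ _ _ haW); first exact: htop.1.
    by move=> i hi; apply: htop.2.
  have hych := ychoice hk hl0 hq hcomb.
  rewrite -/y in hych.
  have hyk : 1 <= y ^+ k by apply: exprn_ege1.
  have hyl : 0 < y ^+ l by apply: exprn_gt0; lra.
  exists 1, ((1 + (y ^+ k - 1) * q) / y ^+ l); split => //; split.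
    apply/andP; split.
      apply: divr_ge0; last exact: ltW.
      have : 0 <= (y ^+ k - 1) * q by apply: mulr_ge0 => //; lra.
      lra.
    by rewrite ltr_pdivrMr // mul1r.
  move=> n _; rewrite mul1r.
  have hc : cond W a l by rewrite /cond (asboolT htop) haW hl0.
  have -> : F W a l n = \sum_(P : profile m n | E n W a l P) profile_prob p P.
    by rewrite /F [RHS]big_mkcond; apply: eq_bigr => P _; rewrite hc.
  exact: (chernoff hp n (g W a l) k l y hk hy).
have hX : forall n (P : profile m n) W a l,
    0 <= (if cond W a l && E n W a l P then profile_prob p P else 0).
  by move=> n P W a l; case: ifP => _ //; exact: prob_ge0.
have stepA : forall n, (0 < n)%N ->
    1 - prob_top_in_EJR p k n <= \sum_W \sum_a \sum_l F W a l n.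
  move=> n hn.
  pose good (P : profile m n) := `[< forall W, top_k p k W -> EJRplus R k P W >].
  have h1 : \sum_(P : profile m n) profile_prob p P = 1.
    by rewrite /profile_prob (sum_profile n (pi_p p)) sum_pi // expr1n.
  have h2 : \sum_(P : profile m n) profile_prob p P =
      prob_top_in_EJR p k n + \sum_(P : profile m n | ~~ good P) profile_prob p P.
    by rewrite (bigID good) /=.
  suff h3 : \sum_(P : profile m n | ~~ good P) profile_prob p P <=
      \sum_W \sum_a \sum_l F W a l n by lra.
  have ex : \sum_(P : profile m n) \sum_W \sum_a \sum_l
      (if cond W a l && E n W a l P then profile_prob p P else 0) =
      \sum_W \sum_a \sum_l F W a l n.
    rewrite [LHS]exchange_big; apply: eq_bigr => W _.
    rewrite [LHS]exchange_big; apply: eq_bigr => a _.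
    by rewrite [LHS]exchange_big.
  rewrite -ex big_mkcond; apply: ler_sum => P _.
  case: ifP => hb; last first.
    by apply: sumr_ge0 => W _; apply: sumr_ge0 => a _; apply: sumr_ge0 => l _; apply: hX.
  move: hb => /asboolPn /existsNP [W /not_implyP [htop hnE]].
  case/not_andP: hnE => [/(_ htop.1) //|/contrapT [a [haW [l [hl1 [N' [hN' hN'P]]]]]]].
  have hlk : (l < k.+1)%N.
    have hc : (#|N'| <= n)%N by have := max_card N'; rewrite card_ord.
    move: hN'; rewrite ler_pdivrMr ?ltr0n // -natrM ler_nat => h.
    have : (l * n <= k * n)%N by apply: leq_trans h _; rewrite mulnC leq_mul2l hc orbT.
    by rewrite leq_pmul2r // ltnS.
  pose lo : 'I_k.+1 := Ordinal hlk.
  apply: (@le_sum_term _ _ _ W).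
    by move=> W'; apply: sumr_ge0 => a' _; apply: sumr_ge0 => l' _; apply: hX.
  apply: (@le_sum_term _ _ _ a).
    by move=> a'; apply: sumr_ge0 => l' _; apply: hX.
  apply: (@le_sum_term _ _ _ lo).
    by move=> l'; apply: hX.
  have -> : cond W a lo && E n W a lo P.
    rewrite /cond (asboolT htop) haW /=; apply/andP; split; first exact: hl1.
    apply: le_trans hN' _; rewrite ler_nat; apply: subset_leq_card.
    apply/subsetP => j hj; rewrite inE /g; have [-> ->] := hN'P j hj; done.
  by [].
have [c [hc [N hN]]] := GD_exp (GD_le stepA stepB).
by exists c; split => //; exists N.
Qed.
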